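(* Let $X$ and $Y$ be metric spaces with finite upper box dimensions, with metrics $d_X$ and $d_Y$, and let $\phi\colon X \to Y$ be any function. Set $s = \overline{\dim}_\mathrm{B} X + \overline{\dim}_\mathrm{B} Y + 2$. Then there exists a countable dense subset $Q = \{q_1, q_2, \dots\}$ of $X$ (with this enumeration) such that for every $x \in X$ there exists a sequence $(q_{n_k})_{k}$ of points of $Q$ with $\phi(q_{n_k}) \to \phi(x)$ as $k \to \infty$, $q_{n_k} \to x$ as $k\to\infty$, and $d_X(q_{n_k}, x) \le n_k^{-1/s}$ for all $k$.
   Context: The upper box dimension $\overline{\dim}_\mathrm{B} X$ of a metric space $X$ is the infimum of those $t$ such that for every $r>0$ there is a cover of $X$ by at most $r^{-t}$ balls of radius $r$ centred in $X$. *)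

(* Defs.v *)
From Stdlib Require Export Reals List.
Open Scope R_scope.

Definition is_metric {T : Type} (d : T -> T -> R) : Prop :=
  (forall x y, 0 <= d x y) /\
  (forall x y, d x y = 0 <-> x = y) /\
  (forall x y, d x y = d y x) /\
  (forall x y z, d x z <= d x y + d y z).

Definition covered_by_balls {T : Type} (d : T -> T -> R) (r N : R) : Prop :=
  exists cs : list T, INR (length cs) <= N /\
    forall x : T, exists c, In c cs /\ d c x < r.

Definition box_exponent {T : Type} (d : T -> T -> R) (t : R) : Prop :=
  exists r0 : R, 0 < r0 /\
    forall r : R, 0 < r < r0 -> covered_by_balls d r (Rpower r (- t)).

(* D is the (finite, real) infimum of the admissible exponents, i.e.
   the upper box dimension of (T, d) exists as a real number and equals D. *)
Definition upper_box_dim {T : Type} (d : T -> T -> R) (D : R) : Prop :=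
  (forall t, box_exponent d t -> D <= t) /\
  (forall b, (forall t, box_exponent d t -> b <= t) -> b <= D).

(* The sequence (q_1, q_2, ...) is encoded as q : nat -> T with q_m = q (m-1). *)
Definition dense_seq {T : Type} (d : T -> T -> R) (q : nat -> T) : Prop :=
  forall x : T, forall eps : R, 0 < eps -> exists n : nat, d (q n) x < eps.

Definition converges {T : Type} (d : T -> T -> R) (u : nat -> T) (l : T) : Prop :=
  forall eps : R, 0 < eps -> exists K : nat, forall k : nat, (K <= k)%nat -> d (u k) l < eps.

(* Main.v *)
Require Import Defs.
From Stdlib Require Import Reals List Lia Lra ClassicalEpsilon Classical.
Open Scope R_scope.

Lemma exp_le' x y : x <= y -> exp x <= exp y.
Proof. intros [H|H]; [left; apply exp_increasing; auto | subst; lra]. Qed.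

Lemma ln_le' x y : 0 < x -> x <= y -> ln x <= ln y.
Proof. intros Hx [H|H]; [left; apply ln_increasing; auto | subst; lra]. Qed.

Lemma stage {X Y : Type} (dX : X -> X -> R) (dY : Y -> Y -> R)
  (hX : is_metric dX) (hY : is_metric dY) (phi : X -> Y) (x0 : X) (r : R)
  (cs : list X) (cy : list Y) :
  (forall x, exists c, In c cs /\ dX c x < r) ->
  (forall y, exists c, In c cy /\ dY c y < r) ->
  exists g : nat -> X, forall x, exists o, (o < length cs * length cy)%nat /\
     dX (g o) x < 2 * r /\ dY (phi (g o)) (phi x) < 2 * r.
Proof.
  intros H1 H2.
  destruct hX as [_ [_ [sX tX]]]. destruct hY as [_ [_ [sY tY]]].
  set (m := length cy). set (y0 := phi x0).
  exists (fun o => epsilon (inhabits x0) (fun p => dX (nth (o / m) cs x0) p < r /\ dY (nth (o mod m) cy y0) (phi p) < r)).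
  intro x. destruct (H1 x) as [c [Hc Hcx]]. destruct (H2 (phi x)) as [c' [Hc' Hc'x]].
  destruct (In_nth cs c x0 Hc) as [i [Hi Hic]].
  destruct (In_nth cy c' y0 Hc') as [l [Hl Hlc]].
  exists (i * m + l)%nat.
  assert (Hm : m <> 0%nat) by (unfold m; lia).
  assert (Hd : ((i * m + l) / m = i)%nat).
  { rewrite Nat.div_add_l by auto. rewrite Nat.div_small by (unfold m; lia). lia. }
  assert (Hmo : ((i * m + l) mod m = l)%nat).
  { rewrite Nat.add_comm, Nat.Div0.mod_add. apply Nat.mod_small. unfold m; lia. }
  rewrite Hd, Hmo.
  match goal with |- context [epsilon ?i ?P] =>
    assert (HP : P (epsilon i P)) by (apply epsilon_spec; exists x; cbv beta; rewrite Hic, Hlc; split; lra) end.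
  rewrite Hic, Hlc in HP |- *. set (p := epsilon _ _) in *. destruct HP as [HP1 HP2].
  split; [ unfold m in *; nia |].
  split.
  - specialize (tX p c x). pose proof (sX p c). lra.
  - specialize (tY (phi p) c' (phi x)). pose proof (sY (phi p) c'). lra.
Qed.


Lemma be_nonneg {T : Type} (d : T -> T -> R) (x0 : T) t : box_exponent d t -> 0 <= t.
Proof.
  intros [r0 [Hr0 H]].
  set (r := Rmin r0 1 / 2).
  assert (Hm : 0 < Rmin r0 1) by (apply Rmin_glb_lt; lra).
  assert (Hr : 0 < r < r0) by (unfold r; pose proof (Rmin_l r0 1); lra).
  assert (Hr1 : r < 1) by (unfold r; pose proof (Rmin_r r0 1); lra).
  destruct (H r Hr) as [cs [Hlen Hcov]].
  destruct (Hcov x0) as [c [Hin _]].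
  destruct cs as [|c1 cs]; [inversion Hin|].
  simpl length in Hlen. rewrite S_INR in Hlen. pose proof (pos_INR (length cs)).
  unfold Rpower in Hlen.
  assert (Hl : ln r < 0) by (rewrite <- ln_1; apply ln_increasing; lra).
  destruct (Rle_or_lt 0 t) as [|Ht]; auto.
  assert (-t * ln r < 0) by nra.
  apply exp_increasing in H1. rewrite exp_0 in H1. lra.
Qed.

Lemma nonempty_of_dim {T : Type} (d : T -> T -> R) D : upper_box_dim d D -> exists x : T, True.
Proof.
  intros [h1 _]. apply NNPP; intro Hn.
  assert (box_exponent d (D - 1)).
  { exists 1. split. lra. intros r Hr. exists nil. split. simpl. unfold Rpower. left; apply exp_pos.
    intro x. exfalso; apply Hn; exists x; auto. }
  apply h1 in H. lra.
Qed.

Lemma dim_nonneg {T : Type} (d : T -> T -> R) (x0 : T) D : upper_box_dim d D -> 0 <= D.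
Proof. intros [_ h2]. apply h2. intros t Ht. exact (be_nonneg d x0 t Ht). Qed.

Lemma be_close {T : Type} (d : T -> T -> R) D : upper_box_dim d D ->
  exists t, box_exponent d t /\ D <= t < D + 1/2.
Proof.
  intros [h1 h2]. apply NNPP; intro Hn.
  assert (D + 1/2 <= D); [|lra].
  apply h2. intros t Ht. destruct (Rle_or_lt (D + 1/2) t); auto.
  exfalso; apply Hn. exists t. split; auto.
Qed.

Lemma big_L c : exists J : nat, forall j : nat, (J <= j)%nat -> c < INR (S j) * ln 2.
Proof.
  assert (Hl2 : 0 < ln 2) by (pose proof ln_lt_2; lra).
  destruct (INR_unbounded (c / ln 2)) as [J HJ].
  exists J. intros j Hj. apply le_INR in Hj. rewrite S_INR.
  apply (Rmult_lt_reg_r (/ ln 2)). apply Rinv_0_lt_compat; auto.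
  rewrite Rmult_assoc, Rinv_r by lra. unfold Rdiv in HJ. lra.
Qed.

Theorem lemma3p1 (X Y : Type) (dX : X -> X -> R) (dY : Y -> Y -> R)
  (hX : is_metric dX) (hY : is_metric dY)
  (DX DY : R) (hDX : upper_box_dim dX DX) (hDY : upper_box_dim dY DY)
  (phi : X -> Y) :
  let s := DX + DY + 2 in
  exists q : nat -> X,
    dense_seq dX q /\
    forall x : X, exists n : nat -> nat,
      converges dY (fun k => phi (q (n k))) (phi x) /\
      converges dX (fun k => q (n k)) x /\
      forall k : nat, dX (q (n k)) x <= Rpower (INR (S (n k))) (- (1 / s)).
Proof.
  intros s.
  destruct (nonempty_of_dim dX DX hDX) as [x0 _].
  pose proof (dim_nonneg dX x0 DX hDX) as DX0.
  pose proof (dim_nonneg dY (phi x0) DY hDY) as DY0.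
  destruct (be_close dX DX hDX) as [tX [[r0X [Hr0X covX]] [HtX1 HtX2]]].
  destruct (be_close dY DY hDY) as [tY [[r0Y [Hr0Y covY]] [HtY1 HtY2]]].
  set (a := tX + tY).
  assert (Hs : 0 < s) by (unfold s; lra).
  assert (Has : a < s) by (unfold a, s; lra).
  assert (Hl2 : 0 < ln 2) by (pose proof ln_lt_2; lra).
  set (r := fun j : nat => exp (- (INR (S j) * ln 2 / s)) * / 2).
  assert (Hr0 : forall j, 0 < r j).
  { intro j. unfold r. pose proof (exp_pos (- (INR (S j) * ln 2 / s))). lra. }
  assert (H2r : forall j, 2 * r j = exp (- (INR (S j) * ln 2 / s))).
  { intro j. unfold r. field. }
  assert (Hlnr : forall j, ln (r j) = - (INR (S j) * ln 2 / s) - ln 2).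
  { intro j. unfold r. rewrite ln_mult by (try apply exp_pos; lra).
    rewrite ln_exp, ln_Rinv by lra. ring. }
  assert (Hsmall : forall eps, 0 < eps -> exists K, forall j, (K <= j)%nat -> 2 * r j < eps).
  { intros eps He. destruct (big_L (- s * ln eps)) as [K HK]. exists K. intros j Hj.
    specialize (HK j Hj). rewrite H2r.
    rewrite <- (exp_ln eps He). apply exp_increasing.
    set (L := INR (S j) * ln 2) in *.
    assert (L / s * s = L) by (field; lra).
    assert (- ln eps < L / s); [|lra].
    apply (Rmult_lt_reg_r s); auto. nra. }
  assert (HJ : exists J, forall j, (J <= j)%nat -> r j < r0X /\ r j < r0Y /\
              exp (a * (INR (S j) * ln 2 / s + ln 2)) <= 2 ^ j).
  { destruct (Hsmall (2 * r0X)) as [K1 HK1]; [lra|].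
    destruct (Hsmall (2 * r0Y)) as [K2 HK2]; [lra|].
    destruct (big_L ((a + 1) * s * ln 2 / (s - a))) as [K3 HK3].
    exists (K1 + K2 + K3)%nat. intros j Hj.
    specialize (HK1 j ltac:(lia)). specialize (HK2 j ltac:(lia)). specialize (HK3 j ltac:(lia)).
    split; [lra|]. split; [lra|].
    replace (2 ^ j) with (exp (INR j * ln 2)).
    2:{ rewrite <- ln_pow by lra. apply exp_ln. apply pow_lt. lra. }
    apply exp_le'. rewrite S_INR in *.
    set (L := (INR j + 1) * ln 2) in *.
    assert (E1 : (a + 1) * s * ln 2 < L * (s - a)).
    { apply (Rmult_lt_compat_r (s - a)) in HK3; [|lra].
      replace ((a + 1) * s * ln 2 / (s - a) * (s - a)) with ((a + 1) * s * ln 2) in HK3 by (field; lra).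
      exact HK3. }
    set (u := L / s).
    assert (Lu : L = u * s) by (unfold u; field; lra).
    rewrite Lu in E1.
    assert (E2 : (a + 1) * ln 2 < u * (s - a)) by nra.
    assert (INR j * ln 2 = L - ln 2) by (unfold L; ring).
    nra. }
  destruct HJ as [J HJ].
  assert (HF : forall j, exists g : nat -> X, (J <= j)%nat -> forall x, exists o,
      (o < 2 ^ j)%nat /\ dX (g o) x < 2 * r j /\ dY (phi (g o)) (phi x) < 2 * r j).
  { intro j. destruct (Compare_dec.le_lt_dec J j) as [Hj|Hj].
    - destruct (HJ j Hj) as [h1 [h2 h3]].
      destruct (covX (r j) (conj (Hr0 j) h1)) as [cs [Hcs Ccs]].
      destruct (covY (r j) (conj (Hr0 j) h2)) as [cy [Hcy Ccy]].
      destruct (stage dX dY hX hY phi x0 (r j) cs cy Ccs Ccy) as [g Hg].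
      exists g. intros _ x. destruct (Hg x) as [o [Ho1 Ho2]]. exists o. split; auto.
      apply Nat.lt_le_trans with (length cs * length cy)%nat; auto.
      apply INR_le. rewrite mult_INR, pow_INR.
      unfold Rpower in Hcs, Hcy. rewrite Hlnr in Hcs, Hcy.
      eapply Rle_trans; [apply Rmult_le_compat; [apply pos_INR|apply pos_INR|exact Hcs|exact Hcy]|].
      rewrite <- exp_plus. replace (INR 2) with 2 by (simpl; ring).
      eapply Rle_trans; [|exact h3]. apply exp_le'. unfold a. right; ring.
    - exists (fun _ => x0). intros; lia. }
  set (F := fun j => proj1_sig (constructive_indefinite_description _ (HF j))).
  assert (HFs : forall j, (J <= j)%nat -> forall x, exists o,
      (o < 2 ^ j)%nat /\ dX (F j o) x < 2 * r j /\ dY (phi (F j o)) (phi x) < 2 * r j).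
  { intro j. exact (proj2_sig (constructive_indefinite_description _ (HF j))). }
  set (q := fun n => F (Nat.log2 n) (n - 2 ^ Nat.log2 n)%nat).
  assert (Key : forall x j, (J <= j)%nat -> exists n, (S n <= 2 ^ S j)%nat /\
      dX (q n) x < 2 * r j /\ dY (phi (q n)) (phi x) < 2 * r j).
  { intros x j Hj. destruct (HFs j Hj x) as [o [Ho [H1 H2]]]. exists (2 ^ j + o)%nat.
    assert (Hlog : Nat.log2 (2 ^ j + o) = j).
    { apply Nat.log2_unique. lia. rewrite Nat.pow_succ_r'. lia. }
    unfold q. rewrite Hlog. replace (2 ^ j + o - 2 ^ j)%nat with o by lia.
    split; [rewrite Nat.pow_succ_r'; lia| auto]. }
  assert (Hbound : forall n j, (S n <= 2 ^ S j)%nat -> 2 * r j <= Rpower (INR (S n)) (- (1 / s))).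
  { intros n j Hn. unfold Rpower. rewrite H2r. apply exp_le'.
    assert (Hln : ln (INR (S n)) <= INR (S j) * ln 2).
    { rewrite <- ln_pow by lra. apply ln_le'. apply lt_0_INR; lia.
      apply le_INR in Hn. rewrite pow_INR in Hn. replace (INR 2) with 2 in Hn by (simpl; ring). exact Hn. }
    assert (0 < / s) by (apply Rinv_0_lt_compat; lra).
    unfold Rdiv. nra. }
  exists q. split.
  - intros x eps He. destruct (Hsmall eps He) as [K HK].
    destruct (Key x (J + K)%nat ltac:(lia)) as [n [_ [H1 _]]]. exists n.
    specialize (HK (J + K)%nat ltac:(lia)). lra.
  - intros x.
    assert (HP : forall k, exists n, (S n <= 2 ^ S (J + k))%nat /\
      dX (q n) x < 2 * r (J + k)%nat /\ dY (phi (q n)) (phi x) < 2 * r (J + k)%nat).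
    { intro k. apply Key. lia. }
    exists (fun k => proj1_sig (constructive_indefinite_description _ (HP k))).
    pose proof (fun k => proj2_sig (constructive_indefinite_description _ (HP k))) as Hspec.
    cbv beta in Hspec.
    split; [|split].
    + intros eps He. destruct (Hsmall eps He) as [K HK]. exists K. intros k Hk.
      destruct (Hspec k) as [_ [_ h]]. specialize (HK (J + k)%nat ltac:(lia)). lra.
    + intros eps He. destruct (Hsmall eps He) as [K HK]. exists K. intros k Hk.
      destruct (Hspec k) as [_ [h _]]. specialize (HK (J + k)%nat ltac:(lia)). lra.
    + intro k. destruct (Hspec k) as [h0 [h1 _]]. pose proof (Hbound _ _ h0). lra.
Qed.
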